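(* Let $T$ be a nonabelian finite simple group and let $A,B$ be proper subgroups of $T$ with $T=AB$. Let $M=T^2$, $G=T\wr S_2=M\rtimes S_2$ (with $S_2$ swapping coordinates), $K_1=A\times B$ and $K_2=B\times A$. Then $K_1\cap K_2=(A\cap B)\times(A\cap B)$ is normalised by $S_2$; $G$ acts transitively on the coset space $\Omega$ of $H=(K_1\cap K_2)\rtimes S_2$, with $M$ a transitive minimal normal subgroup; and for $\omega=H$: (a) $\{K_1,K_2\}$ is a Cartesian system of subgroups in $M$ with respect to $\omega$ which is not $M$-normal and has $|\mathcal F_i|=2$; (b) $\{(A\cap B)\times T,\ T\times(A\cap B)\}$ is also a Cartesian system of subgroups in $M$ with respect to $\omega$, and it is $M$-normal.
   Context: For $G$ innately transitive on $\Omega$ (i.e. with a transitive minimal normal subgroup, a plinth) with plinth $M$ and $\omega\in\Omega$, a Cartesian system of subgroups in $M$ with respect to $\omega$ is a $G_\omega$-conjugation-invariant set $\{K_1,\ldots,K_\ell\}$ of subgroups of $M$ with $\bigcap_i K_i=M_\omega$ and $K_i\bigl(\bigcap_{j\ne i}K_j\bigr)=M$ for all $i$. It is $M$-normal if there are normal subgroups $M_1,\ldots,M_\ell$ of $M$ with $M=M_1\times\cdots\times M_\ell$ and $K_i=(M_i\cap M_\omega)\times\prod_{j\ne i}M_j$ for all $i$. For $M=T_1\times\cdots\times T_k$ with simple factors $T_i$ and projections $\sigma_i:M\to T_i$, $\mathcal F_i=\{\sigma_i(K_j):\sigma_i(K_j)\ne T_i\}$. *)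

(* Defs.v *)
From HB Require Import structures.
From mathcomp Require Import all_boot all_fingroup all_solvable.
Set Implicit Arguments. Unset Strict Implicit. Unset Printing Implicit Defensive.
Import GroupScope.
Local Open Scope group_scope.

(* The wreath product  T wr S_2 = (T x T) ><| S_2  as a concrete       *)
(* finGroupType.  An element ((a,b), e) stands for (a,b) * s^e where  *)
(* s is the generator of S_2 swapping the two coordinates.             *)
Section Wreath2.
Variable gT : finGroupType.

Definition wswap (e : bool) (x : gT * gT) : gT * gT :=
  if e then (x.2, x.1) else x.

Definition wr2_mul (u v : (gT * gT) * bool) : (gT * gT) * bool :=
  (u.1 * wswap u.2 v.1, addb u.2 v.2).
Definition wr2_inv (u : (gT * gT) * bool) : (gT * gT) * bool :=
  (wswap u.2 (u.1)^-1, u.2).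
Definition wr2_one : (gT * gT) * bool := (1, false).

Lemma wswapM e x y : wswap e (x * y) = wswap e x * wswap e y.
Proof. by case: e. Qed.
Lemma wswapV e x : wswap e x^-1 = (wswap e x)^-1.
Proof. by case: e. Qed.
Lemma wswapD e f x : wswap (addb e f) x = wswap e (wswap f x).
Proof. by case: e; case: f; case: x. Qed.

Lemma wr2_mul1g : left_id wr2_one wr2_mul.
Proof. by case=> x e; rewrite /wr2_mul /= mul1g. Qed.

Lemma wr2_mulVg : left_inverse wr2_one wr2_inv wr2_mul.
Proof.
by case=> x e; rewrite /wr2_mul /= -wswapM mulVg addbb; case: e.
Qed.

Lemma wr2_mulgA : associative wr2_mul.
Proof.
case=> x e [y f] [z g]; rewrite /wr2_mul /= addbA wswapM wswapD mulgA //.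
Qed.

Definition wr2 : predArgType := ((gT * gT) * bool)%type.
HB.instance Definition _ := Finite.on wr2.
HB.instance Definition _ := Finite_isGroup.Build wr2
  wr2_mulgA wr2_mul1g wr2_mulVg.

Definition inM (a b : gT) : wr2 := ((a, b), false).
Definition wr2_s : wr2 := ((1, 1), true).
Definition prodM (X Y : {set gT}) : {set wr2} := [set inM a b | a in X, b in Y].
Definition sigma1 (u : wr2) : gT := u.1.1.
Definition sigma2 (u : wr2) : gT := u.1.2.
End Wreath2.

(* M is the plinth, w the chosen point; G_w = 'C_G[w | to] and         *)
(* M_w = 'C_M[w | to].  Ks is the set {K_1, ..., K_l}.                 *)
Section Cartesian.
Variables (aT : finGroupType) (D : {group aT}) (Omega : finType).
Variable to : action D Omega.

Definition cartesian_system (G M : {set aT}) (w : Omega)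
    (Ks : {set {set aT}}) : Prop :=
  [/\ forall K, K \in Ks -> group_set K /\ K \subset M,
      forall g K, g \in 'C_G[w | to] -> K \in Ks -> K :^ g \in Ks,
      M :&: \bigcap_(K in Ks) K = 'C_M[w | to]
    & forall K, K \in Ks -> K * (M :&: \bigcap_(J in Ks | J != K) J) = M].

(* subgroup M_i attached to K_i is Mi K_i.                               *)
Definition M_normal (M : {set aT}) (w : Omega) (Ks : {set {set aT}}) : Prop :=
  exists Mi : {set aT} -> {group aT},
    [/\ forall K, K \in Ks -> Mi K <| M,
        \big[dprod/1]_(K in Ks) Mi K = M
      & forall K, K \in Ks ->
          K = (Mi K :&: 'C_M[w | to]) \x \big[dprod/1]_(J in Ks | J != K) Mi J].
End Cartesian.

Definition calF1 (gT : finGroupType) (Ks : {set {set wr2 gT}}) : {set {set gT}} :=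
  [set (@sigma1 gT) @: K | K : {set wr2 gT} in Ks & (@sigma1 gT) @: K != [set: gT]].
Definition calF2 (gT : finGroupType) (Ks : {set {set wr2 gT}}) : {set {set gT}} :=
  [set (@sigma2 gT) @: K | K : {set wr2 gT} in Ks & (@sigma2 gT) @: K != [set: gT]].

(* Main.v *)
Require Import Defs.
From HB Require Import structures.
From mathcomp Require Import all_boot all_fingroup all_solvable.
Import GroupScope.
Local Open Scope group_scope.
Set Implicit Arguments. Unset Strict Implicit.

Section L.
Variable gT : finGroupType.
Implicit Types a b c d : gT.
Implicit Types X Y : {group gT}.

Lemma wmulE a b e c d f :
  (((a, b), e) : wr2 gT) * ((c, d), f) =
  ((a * (if e then d else c), b * (if e then c else d)), addb e f).
Proof. by case: e. Qed.

Lemma winvE a b e : (((a, b), e) : wr2 gT)^-1 =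
  (((if e then b^-1 else a^-1), (if e then a^-1 else b^-1)), e).
Proof. by case: e. Qed.

Lemma wone : (1 : wr2 gT) = ((1, 1), false).
Proof. by []. Qed.

Lemma inMM a b c d : inM a b * inM c d = inM (a * c) (b * d).
Proof. by []. Qed.
Lemma inMV a b : (inM a b)^-1 = inM a^-1 b^-1.
Proof. by []. Qed.
Lemma inM1 : inM 1 1 = 1 :> wr2 gT. Proof. by []. Qed.
Lemma inMJ a b c d : inM a b ^ inM c d = inM (a ^ c) (b ^ d).
Proof. by []. Qed.
Lemma inMR a b c d : [~ inM a b, inM c d] = inM [~ a, c] [~ b, d].
Proof. by []. Qed.

Lemma mem_prodM (X Y : {set gT}) a b e :
  (((a, b), e) : wr2 gT) \in prodM X Y = [&& ~~ e, a \in X & b \in Y].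
Proof.
apply/imset2P/and3P => [[x y Hx Hy [-> -> ->]] //|[/negbTE -> Ha Hb]].
by exists a b.
Qed.

Lemma prodM_gs X Y : group_set (prodM X Y).
Proof.
apply/group_setP; split; first by rewrite -inM1 mem_prodM !group1.
case=> [[a b] e] [[c d] f]; rewrite !mem_prodM => /and3P[/negbTE -> Ha Hb] /and3P[/negbTE -> Hc Hd].
by rewrite /= !groupM.
Qed.
Canonical prodM_group X Y := Group (prodM_gs X Y).

Lemma mem_M (u : wr2 gT) : (u \in prodM [set: gT] [set: gT]) = ~~ u.2.
Proof. by destruct u as [[a b] e]; rewrite mem_prodM !in_setT; case: e. Qed.

Lemma prodM_subM (X Y : {set gT}) : prodM X Y \subset prodM [set: gT] [set: gT].
Proof. by apply/subsetP => [[[a b] e]]; rewrite mem_prodM mem_M => /and3P[]. Qed.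




Lemma prodM_conj X Y c d : c \in 'N(X) -> d \in 'N(Y) ->
  prodM X Y :^ inM c d = prodM X Y.
Proof.
move=> nc nd; apply/setP => [[[a b] e]].
rewrite mem_conjg inMV /conjg inMV !invgK /inM !wmulE !mem_prodM /=.
case: e => //=.
have -> : c * (a * c^-1) = a ^ c^-1 by rewrite conjgE invgK mulgA.
have -> : d * (b * d^-1) = b ^ d^-1 by rewrite conjgE invgK mulgA.
by rewrite !memJ_norm ?groupV.
Qed.

Lemma prodM_swap (X Y : {set gT}) : prodM X Y :^ wr2_s gT = prodM Y X.
Proof.
apply/setP => [[[a b] e]].
rewrite mem_conjg /conjg invgK /wr2_s !winvE !wmulE mem_prodM mem_prodM /=.
by case: e => //=; rewrite !invg1 !mulg1 !mul1g andbC.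
Qed.

Lemma inMs a b : inM a b ^ wr2_s gT = inM b a.
Proof. by rewrite /conjg /wr2_s winvE !wmulE /= !invg1 !mulg1 !mul1g. Qed.

Definition Hset (C : {set gT}) : {set wr2 gT} :=
  [set u | (u.1.1 \in C) && (u.1.2 \in C)].

Lemma Hset_gs C : group_set (Hset (gval C)).
Proof.
apply/group_setP; split; first by rewrite inE /= !group1.
case=> [[a b] e] [[c d] f]; rewrite !inE /= => /andP[Ha Hb] /andP[Hc Hd].
by case: e; rewrite /= !groupM.
Qed.
Canonical Hset_group C := Group (Hset_gs C).

Lemma prodM_conjH (C X Y : {group gT}) g : C \subset X -> C \subset Y ->
  g \in Hset C -> prodM X Y :^ g = if g.2 then prodM Y X else prodM X Y.
Proof.
move=> sCX sCY; case: g => [[a b] e]; rewrite inE /= => /andP[Ha Hb].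
have -> : ((a, b), e) = inM a b * ((1, 1), e) :> wr2 gT.
  by rewrite wmulE /=; case: e; rewrite !mulg1.
rewrite conjsgM (@conjGid _ (prodM_group X Y) (inM a b)); last by rewrite /inM mem_prodM /= (subsetP sCX) ?(subsetP sCY).
by case: e => /=; [exact: prodM_swap | exact: conjsg1].
Qed.

Lemma prodM_mul (X Y Z W : {set gT}) : prodM X Y * prodM Z W = prodM (X * Z) (Y * W).
Proof.
apply/setP => [[[a b] e]]; apply/mulsgP/idP.
  case=> u v; destruct u as [[x y] f]; destruct v as [[z w] g].
  rewrite !mem_prodM => /and3P[/negbTE -> Hx Hy] /and3P[/negbTE -> Hz Hw].
  by rewrite wmulE /= => -[-> -> ->]; rewrite /= !mem_mulg.
rewrite mem_prodM => /and3P[/negbTE -> /mulsgP[x z Hx Hz ->] /mulsgP[y w Hy Hw ->]].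
by exists (inM x y) (inM z w); rewrite /inM ?mem_prodM ?Hx ?Hy ?Hz ?Hw.
Qed.

Lemma sigma1_prodM (X : {set gT}) Y : (@sigma1 gT) @: prodM X Y = X.
Proof.
apply/setP => a; apply/imsetP/idP => [[[[x y] e]]|Ha].
  by rewrite mem_prodM => /and3P[_ Hx _] ->.
by exists (inM a 1); rewrite ?mem_prodM ?group1 ?Ha.
Qed.
Lemma sigma2_prodM X (Y : {set gT}) : (@sigma2 gT) @: prodM X Y = Y.
Proof.
apply/setP => a; apply/imsetP/idP => [[[[x y] e]]|Ha].
  by rewrite mem_prodM => /and3P[_ _ Hy] ->.
by exists (inM 1 a); rewrite ?mem_prodM ?group1 ?Ha.
Qed.

Lemma prodM_inj X Y : prodM X Y = prodM Y X -> X :=: Y.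
Proof.
move=> e; apply/eqP; rewrite eqEsubset; apply/andP; split; apply/subsetP => x Hx.
  have H1 : (((x, 1), false) : wr2 gT) \in prodM X Y by rewrite mem_prodM Hx group1.
  by rewrite e mem_prodM in H1; case/and3P: H1.
have H1 : (((1, x), false) : wr2 gT) \in prodM X Y by rewrite mem_prodM Hx group1.
by rewrite e mem_prodM in H1; case/and3P: H1.
Qed.

Lemma bigcap2 (P Q : {set wr2 gT}) : \bigcap_(K in [set P; Q]) K = P :&: Q.
Proof.
apply/setP => u; apply/bigcapP/setIP => [H|[HP HQ] K /set2P[]->//].
by split; apply: H; rewrite !inE eqxx ?orbT.
Qed.

Lemma bigcap2' (P Q : {set wr2 gT}) : P != Q ->
  \bigcap_(K in [set P; Q] | K != P) K = Q.
Proof.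
move=> nPQ; apply/setP => u; apply/bigcapP/idP => [H|HQ K].
  by apply: H; rewrite !inE eqxx orbT eq_sym.
by rewrite !inE => /andP[/orP[]/eqP-> //]; rewrite eqxx.
Qed.
Lemma bigcap2'' (P Q : {set wr2 gT}) : P != Q ->
  \bigcap_(K in [set P; Q] | K != Q) K = P.
Proof. by move=> nPQ; rewrite setUC; apply: bigcap2'; rewrite eq_sym. Qed.

Lemma M_normG : [set: wr2 gT] \subset 'N(prodM [set: gT] [set: gT]).
Proof.
apply/subsetP => u _; rewrite inE; apply/subsetP => v; rewrite mem_conjg !mem_M.
destruct u as [[a b] e]; destruct v as [[c d] f].
by rewrite /conjg invgK winvE !wmulE /=; case: e; case: f.
Qed.

Lemma center_triv a : simple [set: gT] -> ~~ abelian [set: gT] -> a != 1 ->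
  exists t, [~ a, t] != 1.
Proof.
move=> simT nabT nta; apply/existsP; apply: contraR nta; rewrite negb_exists => /forallP Hc.
have aZ : a \in 'Z([set: gT]).
  apply/centerP; split => // t _; apply/commgP.
  by move: (Hc t); rewrite negbK.
case/simpleP: simT => _ /(_ _ (center_normal [set: gT])) [Z1|ZT].
  by move: aZ; rewrite Z1 inE.
by case/negP: nabT; apply/center_idP.
Qed.

Lemma key1 (N : {group wr2 gT}) a b : simple [set: gT] -> ~~ abelian [set: gT] ->
  prodM [set: gT] [set: gT] \subset 'N(N) -> inM a b \in N -> a != 1 ->
  forall t, inM t 1 \in N.
Proof.
move=> simT nabT nN Nab nta.
have nNt t : inM t 1 \in 'N(N) by apply: (subsetP nN); rewrite /inM mem_M.
pose N1 := [set x | inM x 1 \in N].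
have gN1 : group_set N1.
  apply/group_setP; split; first by rewrite inE inM1 group1.
  by move=> x y; rewrite !inE => Hx Hy; have := groupM Hx Hy; rewrite inMM mulg1.
have nN1 : Group gN1 <| [set: gT].
  rewrite /normal subsetT /=; apply/subsetP => t _; rewrite inE; apply/subsetP => y.
  rewrite mem_conjg !inE => Hy.
  have := Hy; rewrite -(memJ_norm _ (nNt t)) inMJ conj1g.
  by rewrite -conjgM mulVg conjg1.
have [s nts] := center_triv simT nabT nta.
case/simpleP: simT => _ /(_ _ nN1) [N1_1|N1_T] t; last first.
  by have := in_setT t; rewrite -N1_T inE.
exfalso.
have : inM [~ a, s] 1 \in N.
  have -> : inM [~ a, s] 1 = [~ inM a b, inM s 1] by rewrite inMR commg1.
  by rewrite /commg groupM ?groupV ?memJ_norm.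
have : [~ a, s] \in Group gN1 -> [~ a, s] = 1 by rewrite N1_1 => /set1P.
by rewrite inE => H1 /H1 H2; rewrite H2 eqxx in nts.
Qed.

Lemma key2 (N : {group wr2 gT}) a b : simple [set: gT] -> ~~ abelian [set: gT] ->
  prodM [set: gT] [set: gT] \subset 'N(N) -> inM a b \in N -> b != 1 ->
  forall t, inM 1 t \in N.
Proof.
move=> simT nabT nN Nab ntb.
have nNt t : inM 1 t \in 'N(N) by apply: (subsetP nN); rewrite /inM mem_M.
pose N1 := [set x | inM 1 x \in N].
have gN1 : group_set N1.
  apply/group_setP; split; first by rewrite inE inM1 group1.
  by move=> x y; rewrite !inE => Hx Hy; have := groupM Hx Hy; rewrite inMM mulg1.
have nN1 : Group gN1 <| [set: gT].
  rewrite /normal subsetT /=; apply/subsetP => t _; rewrite inE; apply/subsetP => y.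
  rewrite mem_conjg !inE => Hy.
  have := Hy; rewrite -(memJ_norm _ (nNt t)) inMJ conj1g.
  by rewrite -conjgM mulVg conjg1.
have [s nts] := center_triv simT nabT ntb.
case/simpleP: simT => _ /(_ _ nN1) [N1_1|N1_T] t; last first.
  by have := in_setT t; rewrite -N1_T inE.
exfalso.
have : inM 1 [~ b, s] \in N.
  have -> : inM 1 [~ b, s] = [~ inM a b, inM 1 s] by rewrite inMR commg1.
  by rewrite /commg groupM ?groupV ?memJ_norm.
have : [~ b, s] \in Group gN1 -> [~ b, s] = 1 by rewrite N1_1 => /set1P.
by rewrite inE => H1 /H1 H2; rewrite H2 eqxx in nts.
Qed.

Lemma trivN (N : {group wr2 gT}) X Y : simple [set: gT] -> ~~ abelian [set: gT] ->
  X \proper [set: gT] -> Y \proper [set: gT] ->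
  N \subset prodM X Y -> prodM [set: gT] [set: gT] \subset 'N(N) -> N :=: 1.
Proof.
move=> simT nabT pX pY sN nN; apply/trivgP; apply/subsetP => u Nu.
rewrite inE; apply/negPn/negP => ntu.
have := subsetP sN u Nu; destruct u as [[a b] e]; rewrite mem_prodM => /and3P[/negbTE e0 _ _].
rewrite e0 in Nu ntu.
have [ea|nta] := eqVneq a 1.
  have ntb : b != 1 by apply: contra ntu => /eqP eb; rewrite ea eb.
  case/negP: (proper_neq pY); rewrite eqEsubset subsetT /=; apply/subsetP => t _.
  have := subsetP sN _ (key2 simT nabT nN Nu ntb t).
  by rewrite /inM mem_prodM => /and3P[].
case/negP: (proper_neq pX); rewrite eqEsubset subsetT /=; apply/subsetP => t _.
have := subsetP sN _ (key1 simT nabT nN Nu nta t).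
by rewrite /inM mem_prodM => /and3P[].
Qed.

Lemma minM : simple [set: gT] -> ~~ abelian [set: gT] ->
  minnormal (prodM [set: gT] [set: gT]) [set: wr2 gT].
Proof.
move=> simT nabT; apply/mingroupP; split.
  rewrite M_normG andbT; have /simpleP[ntT _] := simT.
  case/trivgPn: ntT => t _ ntt; apply/trivgPn; exists (inM t 1); first by rewrite /inM mem_M.
  by apply: contra ntt => /eqP; rewrite wone /inM => -[->].
move=> N /andP[ntN nN] sNM; apply/eqP; rewrite eqEsubset sNM /=.
have nNM : prodM [set: gT] [set: gT] \subset 'N(N) := subset_trans (subsetT _) nN.
have s_n : wr2_s gT \in 'N(N) by apply: (subsetP nN); rewrite inE.
case/trivgPn: ntN => u Nu ntu.
have := subsetP sNM u Nu; destruct u as [[a b] e]; rewrite mem_M /= => /negbTE e0.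
rewrite e0 in Nu ntu.
have [H1 H2] : (forall t, inM t 1 \in N) /\ (forall t, inM 1 t \in N).
  have [ea|nta] := eqVneq a 1.
    have ntb : b != 1 by apply: contra ntu => /eqP eb; rewrite ea eb.
    have H2 := key2 simT nabT nNM Nu ntb.
    by split => // t; rewrite -inMs memJ_norm.
  have H1 := key1 simT nabT nNM Nu nta.
  by split => // t; rewrite -inMs memJ_norm.
apply/subsetP => v; destruct v as [[c d] f]; rewrite mem_M /= => /negbTE->.
have -> : (((c, d), false) : wr2 gT) = inM c 1 * inM 1 d by rewrite inMM mulg1 mul1g.
by rewrite groupM.
Qed.

Lemma eMw (C : {group gT}) :
  'C_(prodM [set: gT] [set: gT])[Hset C | 'Rs] = prodM C C.
Proof.
rewrite (astab1Rs (Hset_group C)) /=.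
apply/setP => [[[a b] e]]; rewrite in_setI !mem_prodM !in_setT inE /=.
by case: e.
Qed.

Lemma eGw (C : {group gT}) : 'C_[set: wr2 gT][Hset C | 'Rs] = Hset C.
Proof. by rewrite (astab1Rs (Hset_group C)) /= setTI. Qed.

Lemma cart (C X Y : {group gT}) : X :&: Y = C -> X * Y = [set: gT] ->
  Y * X = [set: gT] -> prodM X Y != prodM Y X ->
  cartesian_system 'Rs [set: wr2 gT] (prodM [set: gT] [set: gT]) (Hset C)
    [set prodM X Y; prodM Y X].
Proof.
move=> eXY mXY mYX nXY.
have sCX : C \subset X by rewrite -eXY subsetIl.
have sCY : C \subset Y by rewrite -eXY subsetIr.
split.
- by move=> K /set2P[]->; (split; [exact: (groupP (prodM_group _ _)) | exact: prodM_subM]).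
- move=> g K; rewrite eGw => Hg /set2P[]->.
    by rewrite (prodM_conjH sCX sCY Hg); case: (g.2); rewrite !inE eqxx ?orbT.
  by rewrite (prodM_conjH sCY sCX Hg); case: (g.2); rewrite !inE eqxx ?orbT.
- rewrite bigcap2 eMw; apply/setP => [[[a b] e]].
  rewrite !in_setI !mem_prodM !in_setT -eXY !in_setI.
  by case: e; case: (a \in X); case: (a \in Y); case: (b \in X); case: (b \in Y).
move=> K /set2P[]->; [rewrite bigcap2' // | rewrite bigcap2'' //];
  rewrite (setIidPr (prodM_subM _ _)) prodM_mul ?mXY ?mYX //.
Qed.

Lemma big2 (R : Type) (idx : R) (op : R -> R -> R) (F : {set wr2 gT} -> R) P Q :
  commutative op -> right_id idx op -> P != Q ->
  \big[op/idx]_(K in [set P; Q]) F K = op (F P) (F Q).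
Proof.
move=> opC op1 nPQ; rewrite -big_filter.
have un : uniq [seq i <- index_enum _ | i \in [set P; Q]].
  by rewrite filter_uniq // index_enum_uniq.
have pe : perm_eq [seq i <- index_enum _ | i \in [set P; Q]] [:: P; Q].
  apply: uniq_perm; [exact: un | by rewrite /= inE nPQ | ].
  by move=> x; rewrite mem_filter mem_index_enum andbT !inE.
move: pe un; case: (filter _ _) => [|x [|y [|z r]]] pe un; have := perm_size pe => //= _.
have hx : x \in [:: P; Q] by rewrite -(perm_mem pe) !inE eqxx.
have hy : y \in [:: P; Q] by rewrite -(perm_mem pe) !inE eqxx orbT.
move: un hx hy; rewrite /= !inE andbT => nxy.
case/orP=> /eqP ex; case/orP=> /eqP ey; subst; rewrite ?eqxx // in nxy;
  rewrite !big_cons big_nil op1 //.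
Qed.

Lemma prodMI (X Y Z W : {set gT}) : prodM X Y :&: prodM Z W = prodM (X :&: Z) (Y :&: W).
Proof.
apply/setP => [[[a b] e]]; rewrite in_setI !mem_prodM !in_setI.
by case: e; case: (a \in X); case: (a \in Z); case: (b \in Y); case: (b \in W).
Qed.

Lemma dprodM1 (X Y : {group gT}) : prodM X 1 \x prodM 1 Y = prodM X Y.
Proof.
rewrite dprodE ?prodM_mul ?mulg1 ?mul1g //.
  apply/centsP => [[[a b] e]] Hu [[c d] f] Hv.
  move: Hu Hv; rewrite !mem_prodM !inE => /and3P[/negbTE -> /eqP-> _] /and3P[/negbTE -> _ /eqP->].
  by rewrite /commute !wmulE /= !mulg1 !mul1g.
rewrite prodMI setI1g setIC setI1g; apply/setP => [[[a b] e]].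
rewrite mem_prodM !inE wone /= !xpair_eqE.
by case: e; rewrite ?andbF ?andbT.
Qed.

Lemma Mnorm_b (C : {group gT}) : prodM C [set: gT] != prodM [set: gT] C ->
  M_normal 'Rs (prodM [set: gT] [set: gT]) (Hset C)
    [set prodM C [set: gT]; prodM [set: gT] C].
Proof.
move=> nL; have nL' : prodM [set: gT] C != prodM C [set: gT] by rewrite eq_sym.
pose M1 := prodM_group [set: gT] 1%G; pose M2 := prodM_group 1%G [set: gT].
have nT c : c \in 'N([set: gT]) by rewrite normT.
have n1 c : c \in 'N(1 : {set gT}) by rewrite norm1.
have nM (X Y : {set gT}) : X = [set: gT] /\ Y = 1 \/ X = 1 /\ Y = [set: gT] ->
    prodM X Y <| prodM [set: gT] [set: gT].
  move=> HXY; rewrite /normal prodM_subM /=; apply/subsetP => [[[c d] e]].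
  rewrite mem_M /= => /negbTE ->; rewrite -[(c, d, false)]/(inM c d) inE.
  by case: HXY => -[-> ->]; rewrite prodM_conj.
exists (fun K => if K == prodM C [set: gT] then M1 else M2).
split.
- by move=> K _; case: ifP => _ /=; apply: nM; [left | right].
- rewrite big2 ?eqxx; [|exact: dprodC|exact: dprodg1|exact: nL].
  by rewrite (negbTE nL') dprodM1.
move=> K /set2P[]->.
  rewrite (@big_pred1_id _ dprod 1 _ (prodM [set: gT] C)); last first.
    move=> J /=; rewrite !inE; have [->|] := eqVneq J (prodM C [set: gT]).
      by rewrite orTb andbF (negbTE nL).
    by rewrite orFb andbT.
  rewrite dprodg1 eqxx (negbTE nL') eMw prodMI.
  by rewrite setTI setI1g dprodM1.
rewrite (@big_pred1_id _ dprod 1 _ (prodM C [set: gT])); last first.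
  move=> J /=; rewrite !inE; have [->|] := eqVneq J (prodM [set: gT] C).
    by rewrite orbT andbF (negbTE nL').
  by rewrite andbT; case: eqP => [->|]; rewrite ?eqxx ?orbF.
rewrite dprodg1 eqxx (negbTE nL') eMw prodMI.
by rewrite setTI setI1g dprodC dprodM1.
Qed.

Lemma notMnorm (C X Y : {group gT}) : simple [set: gT] -> ~~ abelian [set: gT] ->
  X \proper [set: gT] -> Y \proper [set: gT] -> prodM X Y != prodM Y X ->
  ~ M_normal 'Rs (prodM [set: gT] [set: gT]) (Hset C) [set prodM X Y; prodM Y X].
Proof.
move=> simT nabT pX pY nL [Mi [nMi bigM eK]].
have nL' : prodM Y X != prodM X Y by rewrite eq_sym.
have inP : prodM X Y \in [set prodM X Y; prodM Y X] by rewrite !inE eqxx.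
have inQ : prodM Y X \in [set prodM X Y; prodM Y X] by rewrite !inE eqxx orbT.
have t1 : Mi (prodM Y X) :=: 1.
  apply: (trivN simT nabT pX pY); last by case/andP: (nMi _ inQ).
  have := eK _ inP; rewrite (@big_pred1_id _ dprod 1 _ (prodM Y X)); last first.
    move=> J /=; rewrite !inE; have [->|] := eqVneq J (prodM X Y).
      by rewrite orTb andbF (negbTE nL).
    by rewrite orFb andbT.
  rewrite dprodg1 => /esym/dprodW <-; exact: mulG_subr.
have t2 : Mi (prodM X Y) :=: 1.
  apply: (trivN simT nabT pY pX); last by case/andP: (nMi _ inP).
  have := eK _ inQ; rewrite (@big_pred1_id _ dprod 1 _ (prodM X Y)); last first.
    move=> J /=; rewrite !inE; have [->|] := eqVneq J (prodM Y X).
      by rewrite orbT andbF (negbTE nL').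
    by rewrite andbT; case: eqP => [->|]; rewrite ?eqxx ?orbF.
  rewrite dprodg1 => /esym/dprodW <-; exact: mulG_subr.
have /mingroupP[/andP[ntM _] _] := minM simT nabT.
have : (\prod_(K in [set prodM X Y; prodM Y X]) (Mi K : {set wr2 gT})) \subset [1 (wr2 gT)].
  apply: (big_ind (fun S : {set wr2 gT} => S \subset [1 (wr2 gT)])) => //.
    by move=> S1 S2 h1 h2; apply: mul_subG.
  by move=> K /set2P[]->; rewrite ?t1 ?t2.
rewrite (bigdprodW bigM) => /trivgP eM1.
by rewrite eM1 eqxx in ntM.
Qed.

Lemma calF1_2 (X Y : {group gT}) : X \proper [set: gT] -> Y \proper [set: gT] ->
  calF1 [set prodM X Y; prodM Y X] = [set gval X; gval Y].
Proof.
move=> pX pY; apply/setP => Z; rewrite /calF1; apply/imsetP/set2P.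
  case=> K; rewrite inE => /andP[/set2P[]-> _] ->; rewrite sigma1_prodM; [left|right] => //.
case=> ->; [exists (prodM X Y) | exists (prodM Y X)]; rewrite ?sigma1_prodM //;
  by rewrite !inE eqxx ?orbT /= sigma1_prodM proper_neq.
Qed.
Lemma calF2_2 (X Y : {group gT}) : X \proper [set: gT] -> Y \proper [set: gT] ->
  calF2 [set prodM X Y; prodM Y X] = [set gval Y; gval X].
Proof.
move=> pX pY; apply/setP => Z; rewrite /calF2; apply/imsetP/set2P.
  case=> K; rewrite inE => /andP[/set2P[]-> _] ->; rewrite sigma2_prodM; [left|right] => //.
case=> ->; [exists (prodM X Y) | exists (prodM Y X)]; rewrite ?sigma2_prodM //;
  by rewrite !inE eqxx ?orbT /= sigma2_prodM proper_neq.
Qed.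
End L.

Unset Implicit Arguments.

Theorem mainTheorem11 (gT : finGroupType) (A B : {group gT}) :
  simple [set: gT] -> ~~ abelian [set: gT] ->
  A \proper [set: gT] -> B \proper [set: gT] ->
  A * B = [set: gT] ->
  let M := prodM [set: gT] [set: gT] in
  let S2 := <[wr2_s gT]> in
  let G := [set: wr2 gT] in
  let K1 := prodM A B in
  let K2 := prodM B A in
  let H := (K1 :&: K2) * S2 in
  let Omega := rcosets H G in
  [/\ K1 :&: K2 = prodM (A :&: B) (A :&: B) /\ S2 \subset 'N(K1 :&: K2),
      [transitive G, on Omega | 'Rs],
      minnormal M G /\ [transitive M, on Omega | 'Rs],
      (* (a) *)
      [/\ cartesian_system 'Rs G M H [set K1; K2],
          ~ M_normal 'Rs M H [set K1; K2],
          #|calF1 [set K1; K2]| = 2 & #|calF2 [set K1; K2]| = 2]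
    & (* (b) *)
      cartesian_system 'Rs G M H
        [set prodM (A :&: B) [set: gT]; prodM [set: gT] (A :&: B)] /\
      M_normal 'Rs M H
        [set prodM (A :&: B) [set: gT]; prodM [set: gT] (A :&: B)]].
Proof.
move=> simT nabT pA pB eAB M S2 G K1 K2 H Om.
pose C := (A :&: B)%G.
have eBA : B * A = [set: gT] by rewrite -invMG eAB invGid.
have nAB : gval A != gval B.
  apply/eqP => eq; move: eAB; rewrite eq mulGid => eBT.
  by move: (proper_neq pB); rewrite eBT eqxx.
have nK : prodM A B != prodM B A by apply/eqP => /prodM_inj eq; rewrite eq eqxx in nAB.
have eK12 : K1 :&: K2 = prodM C C by rewrite /K1 /K2 prodMI [B :&: A]setIC.
have eH : H = Hset C.
  rewrite /H eK12; apply/eqP; rewrite eqEsubset; apply/andP; split.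
    apply: (@mul_subG _ (Hset_group C)).
      by apply/subsetP => [[[a b] e]]; rewrite mem_prodM => /and3P[_ Ha Hb]; rewrite inE /= Ha Hb.
    by rewrite cycle_subG inE /= !group1.
  apply/subsetP => [[[a b] e]]; rewrite inE /= => /andP[Ha Hb].
  have -> : (((a, b), e) : wr2 gT) = inM a b * ((1, 1), e).
    by rewrite /inM wmulE /=; case: e; rewrite !mulg1.
  apply: mem_mulg; first by rewrite /inM mem_prodM Ha Hb.
  by case: e; [exact: cycle_id | exact: group1].
have eOm : Om = rcosets H M.
  rewrite /Om /G eH; apply/eqP; rewrite eqEsubset; apply/andP; split; last first.
    by apply: imsetS; apply: subsetT.
  apply/subsetP => X /imsetP[x _ ->]; destruct x as [[a b] e].
  have -> : (((a, b), e) : wr2 gT) =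
      (((1, 1), e) : wr2 gT) * inM (if e then b else a) (if e then a else b).
    by rewrite /inM wmulE /=; case: e; rewrite !mul1g.
  rewrite rcosetE rcosetM rcoset_id ?inE ?group1 // mem_rcosets.
  by apply: (subsetP (mulG_subr _ _)); rewrite /inM mem_M.
split.
- split => //; rewrite eK12 cycle_subG inE prodM_swap //.
- by rewrite /Om /G eH; apply: (transRs_rcosets (Hset_group C) [set: wr2 gT]%G).
- split; first exact: minM.
  by rewrite eOm eH; apply: (transRs_rcosets (Hset_group C) (prodM_group [set: gT] [set: gT])).
- split.
  + by rewrite eH; exact: (@cart _ C A B).
  + by rewrite eH; exact: notMnorm.
  + by rewrite calF1_2 // cards2 nAB.
  + by rewrite calF2_2 // cards2 eq_sym nAB.
rewrite eH; have nL : prodM C [set: gT] != prodM [set: gT] C.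
  apply/eqP => /prodM_inj eCT; move: (proper_neq pA).
  by rewrite eqEsubset subsetT /= -eCT subsetIl.
split.
  apply: (@cart _ C C [set: gT]%G) => //; first exact: setIT.
    by apply/mulGidPr; apply: subsetT.
  by apply/mulGidPl; apply: subsetT.
exact: Mnorm_b.
Qed.
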